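(* Let $\mathcal C_1$ and $\mathcal C_2$ be $C^2$ convex curves with the same endpoints and with $\mathcal C_1$ contained in the convex hull of $\mathcal C_2$. Assume the total curvature of $\mathcal C_2$ satisfies $\int_{\mathcal C_2}\kappa\,ds\le\pi$. Then $$\max_{P\in\mathcal C_2}\kappa_{\mathcal C_2}(P)\ge\min_{Q\in\mathcal C_1}\kappa_{\mathcal C_1}(Q).$$
   Context: Curves are of class $C^2$ with nonvanishing first and second derivative vectors, oriented so that the curvature is positive; $\kappa_{\mathcal C}$ denotes the curvature of $\mathcal C$, $s$ arclength, and $\int_{\mathcal C}\kappa\,ds$ the total curvature (total change of the tangent angle). *)

(* Defs.v *)
From Stdlib Require Import Reals.
From Coquelicot Require Import Coquelicot.
Open Scope R_scope.

Record curve := mkCurve { cx : R -> R; cy : R -> R; ca : R; cb : R }.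

Definition pt (c : curve) (t : R) : R * R := (cx c t, cy c t).

Definition in_dom (c : curve) (t : R) : Prop := ca c <= t <= cb c.

Definition trace (c : curve) (p : R * R) : Prop := exists t, in_dom c t /\ pt c t = p.

(* C^2 on the closed parameter interval (via a C^2 function on a neighbourhood
   of each parameter value), with nonvanishing first and second derivative
   vectors, oriented so that the (signed) curvature is positive. *)
Definition C2_curve (c : curve) : Prop :=
  ca c < cb c /\
  forall t, in_dom c t ->
    ex_derive (cx c) t /\ ex_derive (cy c) t /\
    (forall u, ex_derive (cx c) u) /\ (forall u, ex_derive (cy c) u) /\
    ex_derive (Derive (cx c)) t /\ ex_derive (Derive (cy c)) t /\
    (forall u, ex_derive (Derive (cx c)) u) /\ (forall u, ex_derive (Derive (cy c)) u) /\
    continuous (Derive_n (cx c) 2) t /\ continuous (Derive_n (cy c) 2) t.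

Definition dx (c : curve) t := Derive (cx c) t.
Definition dy (c : curve) t := Derive (cy c) t.
Definition ddx (c : curve) t := Derive_n (cx c) 2 t.
Definition ddy (c : curve) t := Derive_n (cy c) 2 t.

Definition curvature (c : curve) (t : R) : R :=
  (dx c t * ddy c t - dy c t * ddx c t) /
  (sqrt (dx c t ^ 2 + dy c t ^ 2)) ^ 3.

Definition regular_pos_curve (c : curve) : Prop :=
  C2_curve c /\
  forall t, in_dom c t ->
    (dx c t, dy c t) <> (0, 0) /\ (ddx c t, ddy c t) <> (0, 0) /\
    0 < curvature c t.

Definition total_curvature (c : curve) : R :=
  RInt (fun t => curvature c t * sqrt (dx c t ^ 2 + dy c t ^ 2)) (ca c) (cb c).

(* Convex curve: every tangent line is a supporting line of the curve
   (the curve lies in the closed half-plane to the left of each tangent,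
   consistently with the positive-curvature orientation). *)
Definition convex_curve (c : curve) : Prop :=
  regular_pos_curve c /\
  forall t u, in_dom c t -> in_dom c u ->
    0 <= dx c t * (cy c u - cy c t) - dy c t * (cx c u - cx c t).

Definition convex_set (K : R * R -> Prop) : Prop :=
  forall p q l, K p -> K q -> 0 <= l <= 1 ->
    K (l * fst p + (1 - l) * fst q, l * snd p + (1 - l) * snd q).

Definition convex_hull (S : R * R -> Prop) (p : R * R) : Prop :=
  forall K, convex_set K -> (forall q, S q -> K q) -> K p.

Definition same_endpoints (c1 c2 : curve) : Prop :=
  (pt c1 (ca c1) = pt c2 (ca c2) /\ pt c1 (cb c1) = pt c2 (cb c2)) \/
  (pt c1 (ca c1) = pt c2 (cb c2) /\ pt c1 (cb c1) = pt c2 (ca c2)).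

Definition is_max_on (c : curve) (f : R -> R) (M : R) : Prop :=
  (exists t, in_dom c t /\ f t = M) /\ (forall t, in_dom c t -> f t <= M).

Definition is_min_on (c : curve) (f : R -> R) (m : R) : Prop :=
  (exists t, in_dom c t /\ f t = m) /\ (forall t, in_dom c t -> m <= f t).

(* Main.v *)
Require Import Defs.
From Stdlib Require Import Reals Lra Psatz.
From Coquelicot Require Import Coquelicot.
Open Scope R_scope.

Definition spd c t := sqrt (dx c t ^ 2 + dy c t ^ 2).
Definition tx c t := dx c t / spd c t.
Definition ty c t := dy c t / spd c t.
Definition kap c t := curvature c t * spd c t.

Lemma rp_glob c : regular_pos_curve c ->
  (forall u, ex_derive (cx c) u) /\ (forall u, ex_derive (cy c) u) /\
  (forall u, ex_derive (Derive (cx c)) u) /\ (forall u, ex_derive (Derive (cy c)) u).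
Proof.
  intros [[Hab H] _].
  assert (Hd : in_dom c (ca c)) by (unfold in_dom; lra).
  destruct (H _ Hd) as (_&_&?&?&_&_&?&?&_).
  tauto.
Qed.

Lemma rp_dom c t : regular_pos_curve c -> in_dom c t ->
  continuous (ddx c) t /\ continuous (ddy c) t /\
  0 < dx c t ^ 2 + dy c t ^ 2 /\ 0 < curvature c t.
Proof.
  intros [[Hab H] H2] Ht.
  destruct (H _ Ht) as (_&_&_&_&_&_&_&_&?&?).
  destruct (H2 _ Ht) as (Hn&_&Hk).
  repeat split; auto.
  destruct (Rle_lt_dec (dx c t ^ 2 + dy c t ^ 2) 0) as [Hle|]; auto.
  exfalso; apply Hn.
  assert (dx c t = 0) by nra. assert (dy c t = 0) by nra.
  rewrite H3, H4; auto.
Qed.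

Lemma spd_pos c t : regular_pos_curve c -> in_dom c t -> 0 < spd c t.
Proof.
  intros Hc Ht. destruct (rp_dom c t Hc Ht) as (_&_&H&_).
  unfold spd. apply sqrt_lt_R0; auto.
Qed.

Lemma spd_sq c t : spd c t * spd c t = dx c t ^ 2 + dy c t ^ 2.
Proof.
  unfold spd. apply sqrt_sqrt. nra.
Qed.

Lemma t_unit c t : regular_pos_curve c -> in_dom c t -> tx c t ^ 2 + ty c t ^ 2 = 1.
Proof.
  intros Hc Ht. pose proof (spd_pos c t Hc Ht). pose proof (spd_sq c t).
  unfold tx, ty. field_simplify; [|lra]. rewrite <- H0. field. lra.
Qed.

Lemma kap_eq c t : regular_pos_curve c -> in_dom c t ->
  kap c t = (dx c t * ddy c t - dy c t * ddx c t) / (spd c t * spd c t).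
Proof.
  intros Hc Ht. pose proof (spd_pos c t Hc Ht).
  unfold kap, curvature. fold (spd c t). field. lra.
Qed.

Lemma kap_pos c t : regular_pos_curve c -> in_dom c t -> 0 < kap c t.
Proof.
  intros Hc Ht. pose proof (spd_pos c t Hc Ht). destruct (rp_dom c t Hc Ht) as (_&_&_&Hk).
  unfold kap. nra.
Qed.

Lemma dx_deriv c u : regular_pos_curve c -> is_derive (cx c) u (dx c u).
Proof. intros Hc. destruct (rp_glob c Hc) as (H&_). apply Derive_correct, H. Qed.
Lemma dy_deriv c u : regular_pos_curve c -> is_derive (cy c) u (dy c u).
Proof. intros Hc. destruct (rp_glob c Hc) as (_&H&_). apply Derive_correct, H. Qed.

Lemma sqrt_fix (a b : R) : sqrt (a * (a * 1) + b * (b * 1)) = sqrt (a ^ 2 + b ^ 2).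
Proof. f_equal; ring. Qed.

Lemma tx_deriv c t : regular_pos_curve c -> in_dom c t ->
  is_derive (tx c) t (- kap c t * ty c t).
Proof.
  intros Hc Ht. destruct (rp_glob c Hc) as (H1&H2&H3&H4).
  destruct (rp_dom c t Hc Ht) as (_&_&HQ&_).
  pose proof (spd_pos c t Hc Ht) as Hs. pose proof (spd_sq c t) as Hs2.
  rewrite (kap_eq c t Hc Ht).
  unfold tx, ty, spd, dx, dy, ddx, ddy in *. simpl.
  auto_derive.
  - repeat split; auto; try (apply H3); try (apply H4); try nra.
    rewrite sqrt_fix. lra.
  - rewrite sqrt_fix. 
    set (s := sqrt _) in *.
    replace (Derive (cx c) t * (Derive (cx c) t * 1) + Derive (cy c) t * (Derive (cy c) t * 1)) with (s*s) by (rewrite Hs2; ring).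
    change (Derive (fun x => Derive (fun x0 => cy c x0) x) t) with (Derive (Derive (cy c)) t).
    change (Derive (fun x => Derive (fun x0 => cx c x0) x) t) with (Derive (Derive (cx c)) t).
    change (Derive (fun x => Derive (cx c) x) t) with (Derive (Derive (cx c)) t).
    change (Derive (fun x => Derive (cy c) x) t) with (Derive (Derive (cy c)) t).
    set (X := Derive (cx c) t) in *. set (Y := Derive (cy c) t) in *.
    set (X2 := Derive (Derive (cx c)) t). set (Y2 := Derive (Derive (cy c)) t).
    field_simplify; [|lra..].
    replace (s^2) with (X^2+Y^2) by (rewrite <- Hs2; ring).
    field. lra.
Qed.

Lemma ty_deriv c t : regular_pos_curve c -> in_dom c t ->
  is_derive (ty c) t (kap c t * tx c t).
Proof.
  intros Hc Ht. destruct (rp_glob c Hc) as (H1&H2&H3&H4).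
  destruct (rp_dom c t Hc Ht) as (_&_&HQ&_).
  pose proof (spd_pos c t Hc Ht) as Hs. pose proof (spd_sq c t) as Hs2.
  rewrite (kap_eq c t Hc Ht).
  unfold tx, ty, spd, dx, dy, ddx, ddy in *. simpl.
  auto_derive.
  - repeat split; auto; try (apply H3); try (apply H4); try nra.
    rewrite sqrt_fix. lra.
  - rewrite sqrt_fix. 
    set (s := sqrt _) in *.
    replace (Derive (cx c) t * (Derive (cx c) t * 1) + Derive (cy c) t * (Derive (cy c) t * 1)) with (s*s) by (rewrite Hs2; ring).
    change (Derive (fun x => Derive (fun x0 => cy c x0) x) t) with (Derive (Derive (cy c)) t).
    change (Derive (fun x => Derive (fun x0 => cx c x0) x) t) with (Derive (Derive (cx c)) t).
    change (Derive (fun x => Derive (cx c) x) t) with (Derive (Derive (cx c)) t).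
    change (Derive (fun x => Derive (cy c) x) t) with (Derive (Derive (cy c)) t).
    set (X := Derive (cx c) t) in *. set (Y := Derive (cy c) t) in *.
    set (X2 := Derive (Derive (cx c)) t). set (Y2 := Derive (Derive (cy c)) t).
    field_simplify; [|lra..].
    replace (s^2) with (X^2+Y^2) by (rewrite <- Hs2; ring).
    field. lra.
Qed.

Lemma dx_cont c u : regular_pos_curve c -> continuous (dx c) u.
Proof. intros Hc. apply (@ex_derive_continuous R_AbsRing R_NormedModule). destruct (rp_glob c Hc) as (_&_&H&_). apply H. Qed.
Lemma dy_cont c u : regular_pos_curve c -> continuous (dy c) u.
Proof. intros Hc. apply (@ex_derive_continuous R_AbsRing R_NormedModule). destruct (rp_glob c Hc) as (_&_&_&H). apply H. Qed.

Lemma cmul (f g : R -> R) x : continuous f x -> continuous g x -> continuous (fun t => f t * g t) x.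
Proof. intros. apply (continuous_mult f g); auto. Qed.
Lemma cadd (f g : R -> R) x : continuous f x -> continuous g x -> continuous (fun t => f t + g t) x.
Proof. intros. apply (continuous_plus f g); auto. Qed.
Lemma csub (f g : R -> R) x : continuous f x -> continuous g x -> continuous (fun t => f t - g t) x.
Proof. intros. apply (continuous_minus f g); auto. Qed.
Lemma cconst (k : R) x : continuous (fun _ : R => k) x.
Proof. apply continuous_const. Qed.
Lemma cinv (f : R -> R) x : continuous f x -> f x <> 0 -> continuous (fun t => / f t) x.
Proof. intros. apply continuous_Rinv_comp; auto. Qed.
Lemma cdiv (f g : R -> R) x : continuous f x -> continuous g x -> g x <> 0 -> continuous (fun t => f t / g t) x.
Proof. intros. unfold Rdiv. apply cmul; auto. apply cinv; auto. Qed.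
Lemma cpow (f : R -> R) n x : continuous f x -> continuous (fun t => f t ^ n) x.
Proof. intros. induction n; simpl. apply cconst. apply cmul; auto. Qed.
Lemma cid x : continuous (fun t : R => t) x.
Proof. apply continuous_id. Qed.

Lemma spd_cont c u : regular_pos_curve c -> continuous (spd c) u.
Proof.
  intros Hc. unfold spd. apply continuous_sqrt_comp.
  apply cadd; apply cpow; auto using dx_cont, dy_cont.
Qed.

Lemma kap_cont c t : regular_pos_curve c -> in_dom c t -> continuous (kap c) t.
Proof.
  intros Hc Ht. destruct (rp_dom c t Hc Ht) as (Hx&Hy&_&_).
  pose proof (spd_pos c t Hc Ht).
  unfold kap, curvature. fold (spd c).
  apply (cmul (fun t => _ / _) (spd c)); [|apply spd_cont; auto].
  apply cdiv.
  - apply csub; apply cmul; auto using dx_cont, dy_cont.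
  - apply cpow, spd_cont; auto.
  - fold (spd c t). apply pow_nonzero. lra.
Qed.

Lemma tx_cont c t : regular_pos_curve c -> in_dom c t -> continuous (tx c) t.
Proof. intros Hc Ht. apply (@ex_derive_continuous R_AbsRing R_NormedModule). eexists. apply tx_deriv; auto. Qed.
Lemma ty_cont c t : regular_pos_curve c -> in_dom c t -> continuous (ty c) t.
Proof. intros Hc Ht. apply (@ex_derive_continuous R_AbsRing R_NormedModule). eexists. apply ty_deriv; auto. Qed.

Definition clampc c u := (ca c + (cb c + u - Rabs (cb c - u)) / 2 + Rabs (ca c - (cb c + u - Rabs (cb c - u)) / 2)) / 2.

Ltac clamp_tac :=
  match goal with |- context [Rabs (cb ?c - ?u)] =>
    destruct (Rle_lt_dec u (cb c));
    [rewrite (Rabs_pos_eq (cb c - u)) by lra | rewrite (Rabs_left (cb c - u)) by lra];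
    match goal with |- context [Rabs (ca c - ?v)] =>
      destruct (Rle_lt_dec (ca c) v);
      [rewrite (Rabs_left1 (ca c - v)) by lra | rewrite (Rabs_pos_eq (ca c - v)) by lra]
    end
  end; lra.

Lemma clamp_dom c u : ca c < cb c -> in_dom c (clampc c u).
Proof.
  intros H.  unfold in_dom, clampc; clamp_tac.
Qed.

Lemma clamp_id c u : in_dom c u -> clampc c u = u.
Proof.
  intros [H1 H2]. unfold clampc; clamp_tac.
Qed.

Lemma cdiv2 (f : R -> R) x : continuous f x -> continuous (fun t => f t / 2) x.
Proof. intros. apply (cdiv f (fun _ => 2)); [auto|apply cconst|]. cbv beta. lra. Qed.

Lemma clamp_cont c u : continuous (clampc c) u.
Proof.
  unfold clampc.
  apply cdiv2.
  apply cadd; [apply cadd|].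
  - apply cconst.
  - apply cdiv2. apply csub; [apply cadd; [apply cconst|apply cid]|].
    apply continuous_Rabs_comp. apply csub; [apply cconst|apply cid].
  - apply continuous_Rabs_comp. apply csub; [apply cconst|].
    apply cdiv2. apply csub; [apply cadd; [apply cconst|apply cid]|].
    apply continuous_Rabs_comp. apply csub; [apply cconst|apply cid].
Qed.

Definition kc c u := kap c (clampc c u).
Definition phi c t := RInt (kc c) (ca c) t.

Lemma kc_cont c u : regular_pos_curve c -> continuous (kc c) u.
Proof.
  intros Hc. unfold kc. apply (continuous_comp (clampc c) (kap c)).
  apply clamp_cont. apply kap_cont; auto. apply clamp_dom. destruct Hc as [[H _] _]; auto.
Qed.

Lemma kc_id c t : in_dom c t -> kc c t = kap c t.
Proof. intros H. unfold kc. rewrite clamp_id; auto. Qed.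

Lemma kc_pos c u : regular_pos_curve c -> 0 < kc c u.
Proof. intros Hc. unfold kc. apply kap_pos; auto. apply clamp_dom. destruct Hc as [[H _] _]; auto. Qed.

Lemma phi_deriv c t : regular_pos_curve c -> is_derive (phi c) t (kc c t).
Proof.
  intros Hc. unfold phi. apply (is_derive_RInt (kc c) (RInt (kc c) (ca c)) (ca c)).
  - apply filter_forall. intros b. apply (@RInt_correct R_CompleteNormedModule). apply (@ex_RInt_continuous R_CompleteNormedModule).
    intros z _. apply kc_cont; auto.
  - apply kc_cont; auto.
Qed.

Lemma phi_a c : phi c (ca c) = 0.
Proof. unfold phi. rewrite RInt_point. reflexivity. Qed.

Lemma phi_cont c t : regular_pos_curve c -> continuity_pt (phi c) t.
Proof.
  intros Hc. apply continuity_pt_filterlim.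
  apply (@ex_derive_continuous R_AbsRing R_NormedModule). eexists. apply phi_deriv; auto.
Qed.

Lemma phi_incr c t t' : regular_pos_curve c -> t < t' -> phi c t < phi c t'.
Proof.
  intros Hc H.
  destruct (MVT_gen (phi c) t t' (kc c)) as (x&_&Hx).
  - intros. apply phi_deriv; auto.
  - intros. apply phi_cont; auto.
  - pose proof (kc_pos c x Hc). nra.
Qed.

Lemma total_phi c : regular_pos_curve c -> total_curvature c = phi c (cb c).
Proof.
  intros Hc. unfold total_curvature, phi. apply RInt_ext.
  intros x Hx. rewrite kc_id. reflexivity. destruct Hc as [[H _] _].
  rewrite Rmin_left in Hx by lra. rewrite Rmax_right in Hx by lra. unfold in_dom; lra.
Qed.

Definition rotx (ux uy th : R) := ux * cos th - uy * sin th.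
Definition roty (ux uy th : R) := uy * cos th + ux * sin th.

Definition hrot c u := (tx c u - rotx (tx c (ca c)) (ty c (ca c)) (phi c u)) ^ 2 +
                       (ty c u - roty (tx c (ca c)) (ty c (ca c)) (phi c u)) ^ 2.

Lemma hrot_deriv c u : regular_pos_curve c -> in_dom c u -> is_derive (hrot c) u 0.
Proof.
  intros Hc Hu.
  pose proof (tx_deriv c u Hc Hu) as D1. pose proof (ty_deriv c u Hc Hu) as D2.
  pose proof (phi_deriv c u Hc) as D3.
  rewrite (kc_id c u Hu) in D3.
  unfold hrot, rotx, roty.
  auto_derive.
  - repeat split; eexists; eauto.
  - replace (Derive (fun x : R => tx c x) u) with (- kap c u * ty c u) by (symmetry; apply is_derive_unique; exact D1).
    replace (Derive (fun x : R => ty c x) u) with (kap c u * tx c u) by (symmetry; apply is_derive_unique; exact D2).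
    replace (Derive (fun x : R => phi c x) u) with (kap c u) by (symmetry; apply is_derive_unique; exact D3).
    ring.
Qed.

Lemma T_rot c t : regular_pos_curve c -> in_dom c t ->
  tx c t = rotx (tx c (ca c)) (ty c (ca c)) (phi c t) /\
  ty c t = roty (tx c (ca c)) (ty c (ca c)) (phi c t).
Proof.
  intros Hc Ht.
  assert (Hh : hrot c t = hrot c (ca c)).
  { destruct Ht as [Ht1 Ht2].
    destruct (MVT_gen (hrot c) (ca c) t (fun _ => 0)) as (x&_&Hx).
    - intros x Hx. rewrite Rmin_left in Hx by lra. rewrite Rmax_right in Hx by lra.
      apply hrot_deriv; auto. unfold in_dom; lra.
    - intros x Hx. rewrite Rmin_left in Hx by lra. rewrite Rmax_right in Hx by lra.
      apply continuity_pt_filterlim.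
      apply (@ex_derive_continuous R_AbsRing R_NormedModule). eexists. apply hrot_deriv; auto.
      unfold in_dom; lra.
    - lra. }
  assert (H0 : hrot c (ca c) = 0).
  { unfold hrot, rotx, roty. rewrite phi_a, cos_0, sin_0. ring. }
  rewrite H0 in Hh. unfold hrot in Hh.
  set (p := tx c t - _) in Hh. set (q := ty c t - _) in Hh.
  assert (p = 0) by nra. assert (q = 0) by nra.
  unfold p, q in *. split; lra.
Qed.

Lemma E_left (f : R -> R) a b l : a < b -> is_derive f a l ->
  (forall x, a <= x <= b -> f a <= f x) -> 0 <= l.
Proof.
  intros Hab Hd Hm. apply is_derive_Reals in Hd.
  destruct (Rle_lt_dec 0 l) as [|Hl]; auto. exfalso.
  destruct (Hd (- l / 2)) as [d Hdd]; [lra|].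
  set (h := Rmin (d / 2) (b - a)).
  assert (Hh1 : 0 < h) by (unfold h; apply Rmin_pos; [destruct d; simpl; lra | lra]).
  assert (Hh2 : h <= b - a) by apply Rmin_r.
  assert (Hh3 : h <= d / 2) by apply Rmin_l.
  specialize (Hdd h). assert (Hq : 0 <= (f (a + h) - f a) / h).
  { apply Rdiv_le_0_compat; [|lra]. assert (f a <= f (a+h)) by (apply Hm; lra). lra. }
  assert (Habs : Rabs ((f (a + h) - f a) / h - l) < - l / 2).
  { apply Hdd. lra. rewrite Rabs_pos_eq by lra. destruct d; simpl in *; lra. }
  apply Rabs_def2 in Habs. lra.
Qed.

Lemma E_right (f : R -> R) a b l : a < b -> is_derive f b l ->
  (forall x, a <= x <= b -> f b <= f x) -> l <= 0.
Proof.
  intros Hab Hd Hm. apply is_derive_Reals in Hd.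
  destruct (Rle_lt_dec l 0) as [|Hl]; auto. exfalso.
  destruct (Hd (l / 2)) as [d Hdd]; [lra|].
  set (h := Rmin (d / 2) (b - a)).
  assert (Hh1 : 0 < h) by (unfold h; apply Rmin_pos; [destruct d; simpl; lra | lra]).
  assert (Hh2 : h <= b - a) by apply Rmin_r.
  assert (Hh3 : h <= d / 2) by apply Rmin_l.
  specialize (Hdd (- h)). assert (Hq : (f (b + - h) - f b) / (- h) <= 0).
  { assert (f b <= f (b + - h)) by (apply Hm; lra).
    unfold Rdiv. rewrite <- Ropp_inv_permute by lra. 
    assert (0 < / h) by (apply Rinv_0_lt_compat; lra). nra. }
  assert (Habs : Rabs ((f (b + - h) - f b) / (- h) - l) < l / 2).
  { apply Hdd. lra. rewrite Rabs_left by lra. destruct d; simpl in *; lra. }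
  apply Rabs_def2 in Habs. lra.
Qed.

Lemma E_int (f : R -> R) a c b l : a < c -> c < b -> is_derive f c l ->
  (forall x, a <= x <= b -> f c <= f x) -> l = 0.
Proof.
  intros H1 H2 Hd Hm.
  assert (0 <= l) by (apply (E_left f c b); auto; intros; apply Hm; lra).
  assert (l <= 0) by (apply (E_right f a c); auto; intros; apply Hm; lra).
  lra.
Qed.

Lemma dx_eq c t : regular_pos_curve c -> in_dom c t -> dx c t = spd c t * tx c t.
Proof. intros Hc Ht. pose proof (spd_pos c t Hc Ht). unfold tx. field. lra. Qed.
Lemma dy_eq c t : regular_pos_curve c -> in_dom c t -> dy c t = spd c t * ty c t.
Proof. intros Hc Ht. pose proof (spd_pos c t Hc Ht). unfold ty. field. lra. Qed.

Ltac exd := repeat match goal with |- _ /\ _ => split | |- True => exact I | |- ex_derive _ _ => eexists; eauto end.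

Definition lin c V1 V2 P1 P2 t := V1 * (cy c t - P2) - V2 * (cx c t - P1).

Lemma lin_deriv c V1 V2 P1 P2 t : regular_pos_curve c -> in_dom c t ->
  is_derive (lin c V1 V2 P1 P2) t (spd c t * (V1 * ty c t - V2 * tx c t)).
Proof.
  intros Hc Ht. pose proof (dx_deriv c t Hc) as D1. pose proof (dy_deriv c t Hc) as D2.
  unfold lin. auto_derive.
  - exd.
  - replace (Derive (fun x : R => cx c x) t) with (dx c t) by (symmetry; apply is_derive_unique; exact D1).
    replace (Derive (fun x : R => cy c x) t) with (dy c t) by (symmetry; apply is_derive_unique; exact D2).
    rewrite (dx_eq c t Hc Ht), (dy_eq c t Hc Ht). ring.
Qed.

Definition fsup c P1 P2 t := tx c t * (P2 - cy c t) - ty c t * (P1 - cx c t).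

Lemma fsup_deriv c P1 P2 t : regular_pos_curve c -> in_dom c t ->
  is_derive (fsup c P1 P2) t (- kap c t * (tx c t * (P1 - cx c t) + ty c t * (P2 - cy c t))).
Proof.
  intros Hc Ht. pose proof (dx_deriv c t Hc) as D1. pose proof (dy_deriv c t Hc) as D2.
  pose proof (tx_deriv c t Hc Ht) as D3. pose proof (ty_deriv c t Hc Ht) as D4.
  unfold fsup. auto_derive.
  - exd.
  - replace (Derive (fun x : R => cx c x) t) with (dx c t) by (symmetry; apply is_derive_unique; exact D1).
    replace (Derive (fun x : R => cy c x) t) with (dy c t) by (symmetry; apply is_derive_unique; exact D2).
    replace (Derive (fun x : R => tx c x) t) with (- kap c t * ty c t) by (symmetry; apply is_derive_unique; exact D3).
    replace (Derive (fun x : R => ty c x) t) with (kap c t * tx c t) by (symmetry; apply is_derive_unique; exact D4).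
    rewrite (dx_eq c t Hc Ht), (dy_eq c t Hc Ht). ring.
Qed.

Lemma conv_T c t u : convex_curve c -> in_dom c t -> in_dom c u ->
  0 <= tx c t * (cy c u - cy c t) - ty c t * (cx c u - cx c t).
Proof.
  intros [Hc Hv] Ht Hu. specialize (Hv t u Ht Hu). pose proof (spd_pos c t Hc Ht).
  rewrite (dx_eq c t Hc Ht), (dy_eq c t Hc Ht) in Hv.
  apply (Rmult_le_reg_l (spd c t)); auto. nra.
Qed.

Lemma hull_half (S : R * R -> Prop) p V1 V2 P1 P2 :
  convex_hull S p -> (forall q, S q -> 0 <= V1 * (snd q - P2) - V2 * (fst q - P1)) ->
  0 <= V1 * (snd p - P2) - V2 * (fst p - P1).
Proof.
  intros Hh HS. apply (Hh (fun q => 0 <= V1 * (snd q - P2) - V2 * (fst q - P1))); auto.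
  intros p1 q1 l Hp Hq Hl. simpl.
  replace (V1 * (l * snd p1 + (1 - l) * snd q1 - P2) - V2 * (l * fst p1 + (1 - l) * fst q1 - P1))
    with (l * (V1 * (snd p1 - P2) - V2 * (fst p1 - P1)) + (1 - l) * (V1 * (snd q1 - P2) - V2 * (fst q1 - P1))) by ring.
  apply Rplus_le_le_0_compat; apply Rmult_le_pos; lra.
Qed.

Lemma rot_cr ux uy a b : ux ^ 2 + uy ^ 2 = 1 ->
  rotx ux uy a * roty ux uy b - roty ux uy a * rotx ux uy b = sin (b - a).
Proof.
  intros H. unfold rotx, roty. rewrite sin_minus.
  replace (sin b * cos a - cos b * sin a) with ((ux^2+uy^2) * (sin b * cos a - cos b * sin a)) by (rewrite H; ring).
  ring.
Qed.

Lemma rot_dot ux uy a b : ux ^ 2 + uy ^ 2 = 1 ->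
  rotx ux uy a * rotx ux uy b + roty ux uy a * roty ux uy b = cos (b - a).
Proof.
  intros H. unfold rotx, roty. rewrite cos_minus.
  replace (cos b * cos a + sin b * sin a) with ((ux^2+uy^2) * (cos b * cos a + sin b * sin a)) by (rewrite H; ring).
  ring.
Qed.

Lemma rot_0x ux uy : rotx ux uy 0 = ux.
Proof. unfold rotx. rewrite cos_0, sin_0. ring. Qed.
Lemma rot_0y ux uy : roty ux uy 0 = uy.
Proof. unfold roty. rewrite cos_0, sin_0. ring. Qed.

Lemma rot_cr0 ux uy b : ux ^ 2 + uy ^ 2 = 1 ->
  ux * roty ux uy b - uy * rotx ux uy b = sin b.
Proof.
  intros H. unfold rotx, roty. transitivity ((ux^2+uy^2)*sin b); [ring | rewrite H; ring].
Qed.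

Lemma rot_dot0 ux uy b : ux ^ 2 + uy ^ 2 = 1 ->
  ux * rotx ux uy b + uy * roty ux uy b = cos b.
Proof.
  intros H. unfold rotx, roty. transitivity ((ux^2+uy^2)*cos b); [ring | rewrite H; ring].
Qed.

Lemma rot_compx ux uy a b :
  rotx (rotx ux uy a) (roty ux uy a) b = rotx ux uy (a + b).
Proof. unfold rotx, roty. rewrite cos_plus, sin_plus. ring. Qed.
Lemma rot_compy ux uy a b :
  roty (rotx ux uy a) (roty ux uy a) b = roty ux uy (a + b).
Proof. unfold rotx, roty. rewrite cos_plus, sin_plus. ring. Qed.

Lemma rot_unit ux uy a : ux ^ 2 + uy ^ 2 = 1 -> rotx ux uy a ^ 2 + roty ux uy a ^ 2 = 1.
Proof.
  intros H. pose proof (rot_dot ux uy a a H). rewrite Rminus_diag, cos_0 in H0.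
  rewrite <- H0. ring.
Qed.

Lemma lin_ex c V1 V2 P1 P2 u : regular_pos_curve c -> ex_derive (lin c V1 V2 P1 P2) u.
Proof.
  intros Hc. pose proof (dx_deriv c u Hc). pose proof (dy_deriv c u Hc).
  unfold lin. auto_derive. exd.
Qed.

Lemma lin_cont c V1 V2 P1 P2 u : regular_pos_curve c -> continuity_pt (lin c V1 V2 P1 P2) u.
Proof.
  intros Hc. apply continuity_pt_filterlim.
  apply (@ex_derive_continuous R_AbsRing R_NormedModule). apply lin_ex; auto.
Qed.

Lemma dom_a c : regular_pos_curve c -> in_dom c (ca c).
Proof. intros [[H _] _]. unfold in_dom; lra. Qed.
Lemma dom_b c : regular_pos_curve c -> in_dom c (cb c).
Proof. intros [[H _] _]. unfold in_dom; lra. Qed.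
Lemma ab_lt c : regular_pos_curve c -> ca c < cb c.
Proof. intros [[H _] _]. auto. Qed.

Lemma phi_range c t : regular_pos_curve c -> in_dom c t -> 0 <= phi c t <= phi c (cb c).
Proof.
  intros Hc [H1 H2]. rewrite <- (phi_a c). split.
  - destruct (Req_dec t (ca c)) as [->|]; [lra|]. left; apply phi_incr; auto; lra.
  - destruct (Req_dec t (cb c)) as [->|]; [lra|]. left; apply phi_incr; auto; lra.
Qed.

Lemma Ta_unit c : regular_pos_curve c -> tx c (ca c) ^ 2 + ty c (ca c) ^ 2 = 1.
Proof. intros Hc. apply t_unit; auto. apply dom_a; auto. Qed.

Lemma cr_T c t : regular_pos_curve c -> in_dom c t ->
  tx c (ca c) * ty c t - ty c (ca c) * tx c t = sin (phi c t).
Proof.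
  intros Hc Ht. destruct (T_rot c t Hc Ht) as [E1 E2]. rewrite E1, E2.
  apply rot_cr0, Ta_unit; auto.
Qed.

Lemma dot_T c t : regular_pos_curve c -> in_dom c t ->
  tx c (ca c) * tx c t + ty c (ca c) * ty c t = cos (phi c t).
Proof.
  intros Hc Ht. destruct (T_rot c t Hc Ht) as [E1 E2]. rewrite E1, E2.
  apply rot_dot0, Ta_unit; auto.
Qed.

Lemma phi_pos c : regular_pos_curve c -> 0 < phi c (cb c).
Proof. intros Hc. rewrite <- (phi_a c). apply phi_incr; auto. apply ab_lt; auto. Qed.

Lemma sin_le0_pi x : 0 < x <= PI -> sin x <= 0 -> x = PI.
Proof.
  intros H1 H2. destruct (Req_dec x PI); auto.
  assert (0 < sin x) by (apply sin_gt_0; lra). lra.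
Qed.

Lemma C2X c : convex_curve c -> phi c (cb c) <= PI ->
  0 < lin c (tx c (ca c)) (ty c (ca c)) (cx c (ca c)) (cy c (ca c)) (cb c).
Proof.
  intros Hcv Hpi. pose proof (proj1 Hcv) as Hc.
  pose proof (ab_lt c Hc) as Hab. pose proof (dom_a c Hc) as Ha. pose proof (dom_b c Hc) as Hb.
  set (f2 := lin c (tx c (ca c)) (ty c (ca c)) (cx c (ca c)) (cy c (ca c))).
  assert (Hf2 : forall u, in_dom c u -> 0 <= f2 u) by (intros u Hu; apply (conv_T c (ca c) u Hcv Ha Hu)).
  destruct (Rlt_le_dec 0 (f2 (cb c))) as [|Hle]; auto. exfalso.
  pose proof (phi_pos c Hc) as Hth.
  assert (Hs : sin (phi c (cb c)) <= 0).
  { pose proof (E_right f2 (ca c) (cb c) _ Hab (lin_deriv c _ _ _ _ (cb c) Hc Hb)) as HE.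
    assert (HE' : spd c (cb c) * (tx c (ca c) * ty c (cb c) - ty c (ca c) * tx c (cb c)) <= 0).
    { apply HE. intros x Hx. pose proof (Hf2 x Hx). lra. }
    rewrite (cr_T c (cb c) Hc Hb) in HE'. pose proof (spd_pos c (cb c) Hc Hb). nra. }
  pose proof (sin_le0_pi _ (conj Hth Hpi) Hs) as Hp.
  destruct (T_rot c (cb c) Hc Hb) as [E1 E2]. rewrite Hp in E1, E2.
  unfold rotx, roty in E1, E2. rewrite cos_PI, sin_PI in E1, E2.
  assert (Hz : forall u, in_dom c u -> f2 u = 0).
  { intros u Hu. pose proof (conv_T c (cb c) u Hcv Hb Hu). pose proof (Hf2 u Hu).
    unfold f2, lin in *. rewrite E1, E2 in H. nra. }
  destruct (IVT_gen (phi c) (ca c) (cb c) (PI / 2)) as (s & Hs1 & Hs2).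
  { intro x. apply phi_cont; auto. }
  { rewrite phi_a, Hp. rewrite Rmin_left, Rmax_right; pose proof PI_RGT_0; lra. }
  rewrite Rmin_left, Rmax_right in Hs1 by lra.
  assert (s <> ca c) by (intros ->; rewrite phi_a in Hs2; pose proof PI_RGT_0; lra).
  assert (s <> cb c) by (intros ->; rewrite Hp in Hs2; pose proof PI_RGT_0; lra).
  assert (Hsd : in_dom c s) by (unfold in_dom; lra).
  pose proof (E_int f2 (ca c) s (cb c) _ ltac:(lra) ltac:(lra) (lin_deriv c _ _ _ _ s Hc Hsd)) as HE.
  rewrite (cr_T c s Hc Hsd), Hs2, sin_PI2 in HE.
  pose proof (spd_pos c s Hc Hsd).
  assert (spd c s * 1 = 0). { apply HE. intros x Hx. rewrite (Hz s Hsd). apply Hf2; auto. }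
  lra.
Qed.

Lemma C2Y c : convex_curve c -> phi c (cb c) <= PI ->
  0 < lin c (tx c (cb c)) (ty c (cb c)) (cx c (cb c)) (cy c (cb c)) (ca c).
Proof.
  intros Hcv Hpi. pose proof (proj1 Hcv) as Hc.
  pose proof (ab_lt c Hc) as Hab. pose proof (dom_a c Hc) as Ha. pose proof (dom_b c Hc) as Hb.
  pose proof (C2X c Hcv Hpi) as HX.
  set (k := lin c (tx c (cb c)) (ty c (cb c)) (cx c (cb c)) (cy c (cb c))).
  assert (Hk : forall u, in_dom c u -> 0 <= k u) by (intros u Hu; apply (conv_T c (cb c) u Hcv Hb Hu)).
  destruct (Rlt_le_dec 0 (k (ca c))) as [|Hle]; auto. exfalso.
  pose proof (phi_pos c Hc) as Hth.
  assert (Hs : sin (phi c (cb c)) <= 0).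
  { pose proof (E_left k (ca c) (cb c) _ Hab (lin_deriv c _ _ _ _ (ca c) Hc Ha)) as HE.
    assert (HE' : 0 <= spd c (ca c) * (tx c (cb c) * ty c (ca c) - ty c (cb c) * tx c (ca c))).
    { apply HE. intros x Hx. pose proof (Hk x Hx). lra. }
    pose proof (cr_T c (cb c) Hc Hb). pose proof (spd_pos c (ca c) Hc Ha). nra. }
  pose proof (sin_le0_pi _ (conj Hth Hpi) Hs) as Hp.
  destruct (T_rot c (cb c) Hc Hb) as [E1 E2]. rewrite Hp in E1, E2.
  unfold rotx, roty in E1, E2. rewrite cos_PI, sin_PI in E1, E2.
  unfold k, lin in Hle. unfold lin in HX. rewrite E1, E2 in Hle. nra.
Qed.

Lemma C2H c u : convex_curve c -> phi c (cb c) <= PI -> in_dom c u ->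
  lin c (cx c (cb c) - cx c (ca c)) (cy c (cb c) - cy c (ca c)) (cx c (ca c)) (cy c (ca c)) u <= 0.
Proof.
  intros Hcv Hpi Hu. pose proof (proj1 Hcv) as Hc.
  pose proof (ab_lt c Hc) as Hab. pose proof (dom_a c Hc) as Ha. pose proof (dom_b c Hc) as Hb.
  pose proof (C2X c Hcv Hpi) as HX. unfold lin in HX.
  set (Dx := cx c (cb c) - cx c (ca c)) in *. set (Dy := cy c (cb c) - cy c (ca c)) in *.
  set (g := lin c Dx Dy (cx c (ca c)) (cy c (ca c))).
  destruct (continuity_ab_maj g (ca c) (cb c)) as (m & Hm1 & Hm2).
  { lra. } { intros; apply lin_cont; auto. }
  assert (Hmd : in_dom c m) by (unfold in_dom; lra).
  enough (g m <= 0) by (pose proof (Hm1 u Hu); lra).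
  destruct (Rle_lt_dec (g m) 0) as [|Hpos]; auto. exfalso.
  assert (m <> ca c) by (intros ->; unfold g, lin in Hpos; lra).
  assert (m <> cb c) by (intros ->; unfold g, lin in Hpos; unfold Dx, Dy in Hpos; lra).
  pose proof (lin_deriv c Dx Dy (cx c (ca c)) (cy c (ca c)) m Hc Hmd) as D.
  apply is_derive_opp in D.
  pose proof (E_int (fun t => - g t) (ca c) m (cb c) _ ltac:(lra) ltac:(lra) D) as HE.
  assert (HE' : - (spd c m * (Dx * ty c m - Dy * tx c m)) = 0).
  { apply HE. intros x Hx. pose proof (Hm1 x Hx). lra. }
  pose proof (spd_pos c m Hc Hmd).
  assert (Hcr : Dx * ty c m = Dy * tx c m) by nra.
  pose proof (t_unit c m Hc Hmd) as Hu1.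
  set (nu := Dx * tx c m + Dy * ty c m).
  assert (HDx : Dx = nu * tx c m).
  { unfold nu. replace ((Dx * tx c m + Dy * ty c m) * tx c m) with (Dx * tx c m ^ 2 + (Dy * tx c m) * ty c m) by ring.
    rewrite <- Hcr. replace (Dx * tx c m ^ 2 + Dx * ty c m * ty c m) with (Dx * (tx c m ^ 2 + ty c m ^ 2)) by ring.
    rewrite Hu1; ring. }
  assert (HDy : Dy = nu * ty c m).
  { unfold nu. replace ((Dx * tx c m + Dy * ty c m) * ty c m) with ((Dx * ty c m) * tx c m + Dy * ty c m ^ 2) by ring.
    rewrite Hcr. replace (Dy * tx c m * tx c m + Dy * ty c m ^ 2) with (Dy * (tx c m ^ 2 + ty c m ^ 2)) by ring.
    rewrite Hu1; ring. }
  pose proof (conv_T c m (ca c) Hcv Hmd Ha) as Hw.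
  unfold g, lin in Hpos. rewrite HDx, HDy in Hpos.
  assert (nu < 0) by nra.
  pose proof (cr_T c m Hc Hmd) as Hsin.
  pose proof (phi_range c m Hc Hmd).
  assert (0 <= sin (phi c m)) by (apply sin_ge_0; lra).
  rewrite HDx, HDy in HX. nra.
Qed.

Definition Te c e1 e2 t := tx c t * e1 + ty c t * e2.
Definition Pj c e1 e2 t := tx c t * (- e2) + ty c t * e1.
Definition Xe c e1 e2 t := cx c t * e1 + cy c t * e2.

Lemma int_X c e1 e2 : regular_pos_curve c ->
  is_RInt (fun t => dx c t * e1 + dy c t * e2) (ca c) (cb c) (Xe c e1 e2 (cb c) - Xe c e1 e2 (ca c)).
Proof.
  intros Hc. apply (is_RInt_derive (Xe c e1 e2)).
  - intros x _. pose proof (dx_deriv c x Hc). pose proof (dy_deriv c x Hc).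
    unfold Xe. auto_derive. exd.
    replace (Derive (fun x : R => cx c x) x) with (dx c x) by (symmetry; apply is_derive_unique; auto).
    replace (Derive (fun x : R => cy c x) x) with (dy c x) by (symmetry; apply is_derive_unique; auto).
    ring.
  - intros x _. apply cadd; apply (cmul _ (fun _ => _)); auto using dx_cont, dy_cont, cconst.
Qed.

Lemma int_P c e1 e2 r : regular_pos_curve c ->
  is_RInt (fun t => r * (kap c t * Te c e1 e2 t)) (ca c) (cb c) (r * Pj c e1 e2 (cb c) - r * Pj c e1 e2 (ca c)).
Proof.
  intros Hc. pose proof (ab_lt c Hc).
  apply (is_RInt_derive (fun t => r * Pj c e1 e2 t)).
  - intros x Hx. rewrite Rmin_left, Rmax_right in Hx by lra.
    assert (Hd : in_dom c x) by (unfold in_dom; lra).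
    pose proof (tx_deriv c x Hc Hd). pose proof (ty_deriv c x Hc Hd).
    unfold Pj. auto_derive. exd.
    replace (Derive (fun x : R => tx c x) x) with (- kap c x * ty c x) by (symmetry; apply is_derive_unique; auto).
    replace (Derive (fun x : R => ty c x) x) with (kap c x * tx c x) by (symmetry; apply is_derive_unique; auto).
    unfold Te. ring.
  - intros x Hx. rewrite Rmin_left, Rmax_right in Hx by lra.
    assert (Hd : in_dom c x) by (unfold in_dom; lra).
    apply (cmul (fun _ => r)); [apply cconst|].
    apply cmul. apply kap_cont; auto.
    unfold Te. apply cadd; apply (cmul _ (fun _ => _)); auto using tx_cont, ty_cont, cconst.
Qed.

Lemma upper_ineq c e1 e2 m : regular_pos_curve c -> 0 < m ->
  (forall t, in_dom c t -> 0 <= Te c e1 e2 t) ->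
  (forall t, in_dom c t -> m <= curvature c t) ->
  Xe c e1 e2 (cb c) - Xe c e1 e2 (ca c) <= / m * Pj c e1 e2 (cb c) - / m * Pj c e1 e2 (ca c).
Proof.
  intros Hc Hm HT Hk. pose proof (ab_lt c Hc).
  apply (is_RInt_le (fun t => dx c t * e1 + dy c t * e2) (fun t => / m * (kap c t * Te c e1 e2 t)) (ca c) (cb c)); [lra | apply int_X; auto | apply int_P; auto | ].
  intros x Hx. assert (Hd : in_dom c x) by (unfold in_dom; lra).
  rewrite (dx_eq c x Hc Hd), (dy_eq c x Hc Hd).
  specialize (HT x Hd). specialize (Hk x Hd). pose proof (spd_pos c x Hc Hd).
  unfold kap. unfold Te in *.
  replace (spd c x * tx c x * e1 + spd c x * ty c x * e2) with (spd c x * (tx c x * e1 + ty c x * e2)) by ring.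
  replace (/ m * (curvature c x * spd c x * (tx c x * e1 + ty c x * e2))) with
     ((curvature c x / m) * (spd c x * (tx c x * e1 + ty c x * e2))) by (field; lra).
  assert (1 <= curvature c x / m).
  { apply (Rmult_le_reg_r m); auto. unfold Rdiv. rewrite Rmult_assoc, Rinv_l by lra. lra. }
  assert (0 <= spd c x * (tx c x * e1 + ty c x * e2)) by (apply Rmult_le_pos; lra).
  nra.
Qed.

Lemma lower_ineq c e1 e2 M : regular_pos_curve c -> 0 < M ->
  (forall t, in_dom c t -> 0 <= Te c e1 e2 t) ->
  (forall t, in_dom c t -> curvature c t <= M) ->
  / M * Pj c e1 e2 (cb c) - / M * Pj c e1 e2 (ca c) <= Xe c e1 e2 (cb c) - Xe c e1 e2 (ca c).
Proof.
  intros Hc Hm HT Hk. pose proof (ab_lt c Hc).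
  apply (is_RInt_le (fun t => / M * (kap c t * Te c e1 e2 t)) (fun t => dx c t * e1 + dy c t * e2) (ca c) (cb c)); [lra | apply int_P; auto | apply int_X; auto | ].
  intros x Hx. assert (Hd : in_dom c x) by (unfold in_dom; lra).
  rewrite (dx_eq c x Hc Hd), (dy_eq c x Hc Hd).
  specialize (HT x Hd). specialize (Hk x Hd). pose proof (spd_pos c x Hc Hd).
  pose proof (rp_dom c x Hc Hd) as (_&_&_&Hk0).
  unfold kap. unfold Te in *.
  replace (spd c x * tx c x * e1 + spd c x * ty c x * e2) with (spd c x * (tx c x * e1 + ty c x * e2)) by ring.
  replace (/ M * (curvature c x * spd c x * (tx c x * e1 + ty c x * e2))) with
     ((curvature c x / M) * (spd c x * (tx c x * e1 + ty c x * e2))) by (field; lra).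
  assert (curvature c x / M <= 1).
  { apply (Rmult_le_reg_r M); auto. unfold Rdiv. rewrite Rmult_assoc, Rinv_l by lra. lra. }
  assert (0 <= spd c x * (tx c x * e1 + ty c x * e2)) by (apply Rmult_le_pos; lra).
  nra.
Qed.

Lemma hull_lin C1 C2 V1 V2 P1 P2 : (forall p, trace C1 p -> convex_hull (trace C2) p) ->
  (forall u, in_dom C2 u -> 0 <= lin C2 V1 V2 P1 P2 u) ->
  forall t, in_dom C1 t -> 0 <= lin C1 V1 V2 P1 P2 t.
Proof.
  intros Hh H t Ht.
  pose proof (hull_half (trace C2) (pt C1 t) V1 V2 P1 P2) as HH.
  unfold lin. simpl in HH. apply HH.
  - apply Hh. exists t. auto.
  - intros q (u & Hu & <-). simpl. apply (H u Hu).
Qed.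

Lemma reversed_false C1 C2 : convex_curve C1 -> convex_curve C2 -> phi C2 (cb C2) <= PI ->
  (forall p, trace C1 p -> convex_hull (trace C2) p) ->
  pt C1 (ca C1) = pt C2 (cb C2) -> pt C1 (cb C1) = pt C2 (ca C2) -> False.
Proof.
  intros Hcv1 Hcv2 Hpi Hh E1 E2.
  pose proof (proj1 Hcv1) as Hc1. pose proof (proj1 Hcv2) as Hc2.
  unfold pt in E1, E2. injection E1 as E1x E1y. injection E2 as E2x E2y.
  pose proof (dom_a C1 Hc1) as Ha1. pose proof (dom_b C1 Hc1) as Hb1. pose proof (ab_lt C1 Hc1) as Hab1.
  pose proof (C2Y C2 Hcv2 Hpi) as HY. unfold lin in HY.
  set (xa := cx C2 (ca C2)) in *. set (ya := cy C2 (ca C2)) in *.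
  set (xb := cx C2 (cb C2)) in *. set (yb := cy C2 (cb C2)) in *.
  set (Tbx := tx C2 (cb C2)) in *. set (Tby := ty C2 (cb C2)) in *.
  set (Dx := xb - xa). set (Dy := yb - ya).
  set (T1x := tx C1 (ca C1)). set (T1y := ty C1 (ca C1)).
  pose proof (conv_T C1 (ca C1) (cb C1) Hcv1 Ha1 Hb1) as R1.
  rewrite E1x, E1y, E2x, E2y in R1. fold T1x T1y in R1.
  assert (Hc : forall t, in_dom C1 t -> 0 <= lin C1 (- Dx) (- Dy) xa ya t).
  { apply (hull_lin C1 C2); auto. intros u Hu. pose proof (C2H C2 u Hcv2 Hpi Hu).
    unfold lin in *. fold xa ya xb yb in H. fold Dx Dy in H. lra. }
  pose proof (lin_deriv C1 (- Dx) (- Dy) xa ya (ca C1) Hc1 Ha1) as D2.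
  pose proof (E_left _ _ _ _ Hab1 D2) as R2.
  assert (R2' : 0 <= spd C1 (ca C1) * (- Dx * T1y - - Dy * T1x)).
  { apply R2. intros x Hx. pose proof (Hc x Hx). unfold lin. rewrite E1x, E1y.
    unfold Dx, Dy. ring_simplify. unfold lin in H. unfold Dx, Dy in H. lra. }
  pose proof (spd_pos C1 (ca C1) Hc1 Ha1) as Hs.
  assert (Hcr : Dx * T1y = Dy * T1x).
  { assert (- Dx * T1y - - Dy * T1x >= 0) by nra.
    unfold Dx, Dy in *. lra. }
  pose proof (t_unit C1 (ca C1) Hc1 Ha1) as Hu1. fold T1x T1y in Hu1.
  set (lam := Dx * T1x + Dy * T1y).
  assert (HDx : Dx = lam * T1x).
  { unfold lam. replace ((Dx * T1x + Dy * T1y) * T1x) with (Dx * T1x ^ 2 + (Dy * T1x) * T1y) by ring.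
    rewrite <- Hcr. replace (Dx * T1x ^ 2 + Dx * T1y * T1y) with (Dx * (T1x ^ 2 + T1y ^ 2)) by ring.
    rewrite Hu1; ring. }
  assert (HDy : Dy = lam * T1y).
  { unfold lam. replace ((Dx * T1x + Dy * T1y) * T1y) with ((Dx * T1y) * T1x + Dy * T1y ^ 2) by ring.
    rewrite Hcr. replace (Dy * T1x * T1x + Dy * T1y ^ 2) with (Dy * (T1x ^ 2 + T1y ^ 2)) by ring.
    rewrite Hu1; ring. }
  pose proof (fsup_deriv C1 xa ya (ca C1) Hc1 Ha1) as D3.
  pose proof (E_left _ _ _ _ Hab1 D3) as R3.
  assert (R3' : 0 <= - kap C1 (ca C1) * (T1x * (xa - xb) + T1y * (ya - yb))).
  { rewrite <- E1x, <- E1y. apply R3. intros x Hx.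
    pose proof (conv_T C1 x (cb C1) Hcv1 Hx Hb1). unfold fsup. rewrite E1x, E1y, E2x, E2y in *.
    fold T1x T1y. fold xa ya in H.
    replace (T1x * (ya - yb) - T1y * (xa - xb)) with (- (T1x * Dy - T1y * Dx)) by (unfold Dx, Dy; ring).
    rewrite HDx, HDy. ring_simplify. lra. }
  pose proof (kap_pos C1 (ca C1) Hc1 Ha1) as Hk.
  replace (T1x * (xa - xb) + T1y * (ya - yb)) with (- (T1x * Dx + T1y * Dy)) in R3' by (unfold Dx, Dy; ring).
  rewrite HDx, HDy in R3'.
  replace (- kap C1 (ca C1) * - (T1x * (lam * T1x) + T1y * (lam * T1y))) with (kap C1 (ca C1) * lam * (T1x^2 + T1y^2)) in R3' by ring.
  rewrite Hu1 in R3'.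
  assert (Hlam : 0 <= lam).
  { destruct (Rle_lt_dec 0 lam); auto. assert (kap C1 (ca C1) * lam < 0) by (apply Rmult_pos_neg; auto). lra. }
  assert (Hg : forall t, in_dom C1 t -> 0 <= lin C1 Tbx Tby xb yb t).
  { apply (hull_lin C1 C2); auto. intros u Hu. apply (conv_T C2 (cb C2) u Hcv2 (dom_b C2 Hc2) Hu). }
  pose proof (lin_deriv C1 Tbx Tby xb yb (ca C1) Hc1 Ha1) as D4.
  pose proof (E_left _ _ _ _ Hab1 D4) as R4.
  assert (R4' : 0 <= spd C1 (ca C1) * (Tbx * T1y - Tby * T1x)).
  { apply R4. intros x Hx. pose proof (Hg x Hx). unfold lin in *. rewrite E1x, E1y. fold xb yb. ring_simplify. lra. }
  assert (0 <= Tbx * T1y - Tby * T1x) by nra.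
  replace (Tbx * (ya - yb) - Tby * (xa - xb)) with (- Tbx * Dy + Tby * Dx) in HY by (unfold Dx, Dy; ring).
  rewrite HDx, HDy in HY. nra.
Qed.

Lemma angle_of ux uy vx vy : ux ^ 2 + uy ^ 2 = 1 -> vx ^ 2 + vy ^ 2 = 1 -> 0 <= ux * vy - uy * vx ->
  exists th, 0 <= th <= PI /\ vx = rotx ux uy th /\ vy = roty ux uy th.
Proof.
  intros Hu Hv Hc.
  set (d := ux * vx + uy * vy). set (cr := ux * vy - uy * vx) in *.
  assert (Hdc : d ^ 2 + cr ^ 2 = 1).
  { unfold d, cr. transitivity ((ux^2+uy^2)*(vx^2+vy^2)); [ring|rewrite Hu, Hv; ring]. }
  assert (Hd : -1 <= d <= 1) by (split; nra).
  exists (acos d). split; [apply acos_bound|].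
  assert (Hs : sin (acos d) = cr).
  { rewrite sin_acos by auto. replace (1 - Rsqr d) with (Rsqr cr) by (unfold Rsqr; nra).
    apply sqrt_Rsqr; auto. }
  unfold rotx, roty. rewrite cos_acos, Hs by auto. unfold d, cr. split.
  - transitivity (vx * (ux^2+uy^2)); [rewrite Hu; ring | ring].
  - transitivity (vy * (ux^2+uy^2)); [rewrite Hu; ring | ring].
Qed.

Lemma T1_rot c t ux uy p0 : regular_pos_curve c -> in_dom c t ->
  tx c (ca c) = rotx ux uy p0 -> ty c (ca c) = roty ux uy p0 ->
  tx c t = rotx ux uy (p0 + phi c t) /\ ty c t = roty ux uy (p0 + phi c t).
Proof.
  intros Hc Ht E1 E2. destruct (T_rot c t Hc Ht) as [F1 F2]. rewrite F1, F2, E1, E2.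
  rewrite rot_compx, rot_compy. auto.
Qed.

Lemma sin_neg_nonpos x : -PI <= x <= 0 -> sin x <= 0.
Proof. intros H. rewrite <- (Ropp_involutive x), sin_neg. pose proof (sin_ge_0 (- x)). lra. Qed.

Lemma angle_real p0 pb d th : 0 <= p0 <= PI -> 0 < d < PI -> 0 < th <= PI ->
  0 < sin (th - d) -> sin (p0 - d) <= 0 -> 0 <= sin (pb - d) -> sin (pb - th) <= 0 ->
  p0 <= pb -> th < pb -> p0 + 2 * PI <= pb.
Proof.
  intros H0 Hd Hth Htd Hp0 Hpb1 Hpb2 Hle Hgt.
  assert (d < th).
  { destruct (Rlt_le_dec d th); auto. assert (sin (th - d) <= 0) by (apply sin_neg_nonpos; lra). lra. }
  assert (p0 <= d).
  { destruct (Rle_lt_dec p0 d); auto. assert (0 < sin (p0 - d)) by (apply sin_gt_0; lra). lra. }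
  destruct (Rle_lt_dec (d + 2 * PI) pb); [lra|].
  destruct (Rle_lt_dec (pb - d) PI).
  - assert (0 < sin (pb - th)) by (apply sin_gt_0; lra). lra.
  - destruct (Req_dec (pb - d) (2 * PI)); [lra|].
    assert (sin (pb - d) < 0) by (apply sin_lt_0; lra). lra.
Qed.

Lemma par_decomp vx vy tx0 ty0 : tx0 ^ 2 + ty0 ^ 2 = 1 -> vx * ty0 = vy * tx0 ->
  vx = (vx * tx0 + vy * ty0) * tx0 /\ vy = (vx * tx0 + vy * ty0) * ty0.
Proof.
  intros Hu Hc. split.
  - replace ((vx * tx0 + vy * ty0) * tx0) with (vx * tx0 ^ 2 + (vy * tx0) * ty0) by ring.
    rewrite <- Hc. transitivity (vx * (tx0^2+ty0^2)); [rewrite Hu; ring| ring].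
  - replace ((vx * tx0 + vy * ty0) * ty0) with ((vx * ty0) * tx0 + vy * ty0 ^ 2) by ring.
    rewrite Hc. transitivity (vy * (tx0^2+ty0^2)); [rewrite Hu; ring| ring].
Qed.

Lemma loop_contra C1 t2 : convex_curve C1 -> in_dom C1 t2 -> ca C1 < t2 ->
  tx C1 t2 = tx C1 (ca C1) -> ty C1 t2 = ty C1 (ca C1) ->
  (forall t, in_dom C1 t -> 0 <= lin C1 (- (cx C1 (cb C1) - cx C1 (ca C1))) (- (cy C1 (cb C1) - cy C1 (ca C1)))
                                   (cx C1 (ca C1)) (cy C1 (ca C1)) t) ->
  exists nu, nu <= 0 /\ cx C1 (cb C1) - cx C1 (ca C1) = nu * tx C1 (ca C1) /\
                        cy C1 (cb C1) - cy C1 (ca C1) = nu * ty C1 (ca C1).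
Proof.
  intros Hcv Ht2 Hat2 E1 E2 Hc.
  pose proof (proj1 Hcv) as Hc1.
  pose proof (dom_a C1 Hc1) as Ha1. pose proof (dom_b C1 Hc1) as Hb1. pose proof (ab_lt C1 Hc1) as Hab1.
  pose proof (t_unit C1 (ca C1) Hc1 Ha1) as Hu.
  set (xa := cx C1 (ca C1)) in *. set (ya := cy C1 (ca C1)) in *.
  set (xb := cx C1 (cb C1)) in *. set (yb := cy C1 (cb C1)) in *.
  set (T1x := tx C1 (ca C1)) in *. set (T1y := ty C1 (ca C1)) in *.
  set (x2 := cx C1 t2). set (y2 := cy C1 t2).
  pose proof (conv_T C1 (ca C1) t2 Hcv Ha1 Ht2) as W1. fold xa ya T1x T1y x2 y2 in W1.
  pose proof (conv_T C1 t2 (ca C1) Hcv Ht2 Ha1) as W2. rewrite E1, E2 in W2. fold xa ya T1x T1y x2 y2 in W2.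
  assert (Hw : (x2 - xa) * T1y = (y2 - ya) * T1x) by lra.
  destruct (par_decomp _ _ _ _ Hu Hw) as [Px Py].
  set (mu := (x2 - xa) * T1x + (y2 - ya) * T1y) in *.
  pose proof (fsup_deriv C1 xa ya t2 Hc1 Ht2) as DF.
  assert (HF : forall x, ca C1 <= x <= cb C1 -> fsup C1 xa ya t2 <= fsup C1 xa ya x).
  { intros x Hx. pose proof (conv_T C1 x (ca C1) Hcv Hx Ha1). unfold fsup. fold xa ya in H.
    rewrite E1, E2. fold T1x T1y x2 y2. lra. }
  pose proof (kap_pos C1 t2 Hc1 Ht2) as Hk.
  assert (Hder : - kap C1 t2 * (tx C1 t2 * (xa - cx C1 t2) + ty C1 t2 * (ya - cy C1 t2)) = kap C1 t2 * mu).
  { rewrite E1, E2. fold T1x T1y x2 y2.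
    replace (xa - x2) with (- (x2 - xa)) by ring. replace (ya - y2) with (- (y2 - ya)) by ring.
    rewrite Px, Py. replace (- kap C1 t2 * (T1x * - (mu * T1x) + T1y * - (mu * T1y))) with (kap C1 t2 * mu * (T1x^2 + T1y^2)) by ring.
    rewrite Hu. ring. }
  rewrite Hder in DF.
  destruct (Req_dec t2 (cb C1)) as [Eb|Nb].
  -
    assert (kap C1 t2 * mu <= 0).
    { apply (E_right (fsup C1 xa ya) (ca C1) t2); auto. rewrite Eb. auto. rewrite Eb in HF. auto. }
    exists mu. split.
    + destruct (Rle_lt_dec mu 0); auto. assert (0 < kap C1 t2 * mu) by (apply Rmult_lt_0_compat; auto). lra.
    + unfold x2, y2 in Px, Py. rewrite Eb in Px, Py. fold xb yb in Px, Py. auto.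
  - assert (Hlt : t2 < cb C1) by (destruct Ht2; lra).
    assert (kap C1 t2 * mu = 0) by (apply (E_int (fsup C1 xa ya) (ca C1) t2 (cb C1)); auto).
    assert (Hmu : mu = 0).
    { destruct (Req_dec mu 0); auto. exfalso. assert (kap C1 t2 * mu <> 0) by (apply Rmult_integral_contrapositive; split; lra). lra. }
    rewrite Hmu in Px, Py.
    (* c has min at t2 *)
    set (Dx := xb - xa) in *. set (Dy := yb - ya) in *.
    pose proof (lin_deriv C1 (- Dx) (- Dy) xa ya t2 Hc1 Ht2) as DC.
    assert (HC0 : spd C1 t2 * (- Dx * ty C1 t2 - - Dy * tx C1 t2) = 0).
    { apply (E_int (lin C1 (- Dx) (- Dy) xa ya) (ca C1) t2 (cb C1)); auto.
      intros x Hx. pose proof (Hc x Hx). unfold lin at 1. fold x2 y2.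
      replace (x2 - xa) with 0 by lra. replace (y2 - ya) with 0 by lra. lra. }
    pose proof (spd_pos C1 t2 Hc1 Ht2).
    rewrite E1, E2 in HC0. fold T1x T1y in HC0.
    assert (Hcr : Dx * T1y = Dy * T1x).
    { assert (- Dx * T1y - - Dy * T1x = 0).
      { destruct (Req_dec (- Dx * T1y - - Dy * T1x) 0); auto.
        assert (spd C1 t2 * (- Dx * T1y - - Dy * T1x) <> 0) by (apply Rmult_integral_contrapositive; split; lra). lra. }
      lra. }
    destruct (par_decomp _ _ _ _ Hu Hcr) as [Qx Qy].
    set (lam := Dx * T1x + Dy * T1y) in *.
    exists lam. split; [|split; auto].
    assert (HFB0 : fsup C1 xb yb (ca C1) = 0).
    { unfold fsup. fold xa ya T1x T1y. unfold Dx, Dy in Hcr. nra. }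
    pose proof (fsup_deriv C1 xb yb (ca C1) Hc1 Ha1) as DB.
    assert (0 <= - kap C1 (ca C1) * (tx C1 (ca C1) * (xb - cx C1 (ca C1)) + ty C1 (ca C1) * (yb - cy C1 (ca C1)))).
    { apply (E_left (fsup C1 xb yb) (ca C1) (cb C1)); auto.
      intros x Hx. pose proof (conv_T C1 x (cb C1) Hcv Hx Hb1) as Hq. fold xb yb in Hq.
      rewrite HFB0. unfold fsup. lra. }
    rename H1 into HB.
    fold xa ya T1x T1y in HB. fold Dx Dy in HB.
    rewrite Qx, Qy in HB.
    replace (- kap C1 (ca C1) * (T1x * (lam * T1x) + T1y * (lam * T1y))) with (- kap C1 (ca C1) * lam * (T1x^2+T1y^2)) in HB by ring.
    rewrite Hu in HB. pose proof (kap_pos C1 (ca C1) Hc1 Ha1).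
    destruct (Rle_lt_dec lam 0); auto. assert (0 < kap C1 (ca C1) * lam) by (apply Rmult_lt_0_compat; auto). lra.
Qed.

Lemma sign1 a b x : 0 < a -> 0 < b -> 0 <= a * (- b * x) -> x <= 0.
Proof. intros Ha Hb H. destruct (Rle_lt_dec x 0); auto. assert (0 < a * (b * x)) by (repeat apply Rmult_lt_0_compat; auto). lra. Qed.
Lemma sign2 a b x : 0 < a -> 0 < b -> a * (- b * x) <= 0 -> 0 <= x.
Proof. intros Ha Hb H. destruct (Rle_lt_dec 0 x); auto. assert (0 < a * (b * - x)) by (repeat apply Rmult_lt_0_compat; lra). lra. Qed.
Lemma sign3 a x : 0 < a -> a * x <= 0 -> x <= 0.
Proof. intros Ha H. destruct (Rle_lt_dec x 0); auto. assert (0 < a * x) by (repeat apply Rmult_lt_0_compat; lra). lra. Qed.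

Lemma forward_angles C1 C2 : convex_curve C1 -> convex_curve C2 -> phi C2 (cb C2) <= PI ->
  (forall p, trace C1 p -> convex_hull (trace C2) p) ->
  pt C1 (ca C1) = pt C2 (ca C2) -> pt C1 (cb C1) = pt C2 (cb C2) ->
  exists p0, 0 <= p0 /\ p0 + phi C1 (cb C1) <= phi C2 (cb C2) /\
    tx C1 (ca C1) = rotx (tx C2 (ca C2)) (ty C2 (ca C2)) p0 /\
    ty C1 (ca C1) = roty (tx C2 (ca C2)) (ty C2 (ca C2)) p0.
Proof.
  intros Hcv1 Hcv2 Hpi Hh E1 E2.
  pose proof (proj1 Hcv1) as Hc1. pose proof (proj1 Hcv2) as Hc2.
  unfold pt in E1, E2. injection E1 as E1x E1y. injection E2 as E2x E2y.
  pose proof (dom_a C1 Hc1) as Ha1. pose proof (dom_b C1 Hc1) as Hb1. pose proof (ab_lt C1 Hc1) as Hab1.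
  pose proof (dom_a C2 Hc2) as Ha2. pose proof (dom_b C2 Hc2) as Hb2.
  pose proof (C2X C2 Hcv2 Hpi) as HX. unfold lin in HX.
  pose proof (C2Y C2 Hcv2 Hpi) as HY. unfold lin in HY.
  destruct (T_rot C2 (cb C2) Hc2 Hb2) as [Rbx Rby].
  pose proof (phi_pos C2 Hc2) as Hth.
  pose proof (Ta_unit C2 Hc2) as HuA.
  pose proof (t_unit C1 (ca C1) Hc1 Ha1) as HuT.
  set (xa := cx C2 (ca C2)) in *. set (ya := cy C2 (ca C2)) in *.
  set (xb := cx C2 (cb C2)) in *. set (yb := cy C2 (cb C2)) in *.
  set (Tax := tx C2 (ca C2)) in *. set (Tay := ty C2 (ca C2)) in *.
  set (Tbx := tx C2 (cb C2)) in *. set (Tby := ty C2 (cb C2)) in *.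
  set (Th := phi C2 (cb C2)) in *.
  set (T1x := tx C1 (ca C1)) in *. set (T1y := ty C1 (ca C1)) in *.
  set (Dx := xb - xa). set (Dy := yb - ya).
  assert (Hf : forall t, in_dom C1 t -> 0 <= lin C1 Tax Tay xa ya t).
  { apply (hull_lin C1 C2); auto. intros u Hu. apply (conv_T C2 (ca C2) u Hcv2 Ha2 Hu). }
  assert (Hcr0 : 0 <= Tax * T1y - Tay * T1x).
  { pose proof (E_left _ _ _ _ Hab1 (lin_deriv C1 Tax Tay xa ya (ca C1) Hc1 Ha1)) as HE.
    assert (0 <= spd C1 (ca C1) * (Tax * T1y - Tay * T1x)).
    { apply HE. intros x Hx. pose proof (Hf x Hx). unfold lin in *. rewrite E1x, E1y. lra. }
    pose proof (spd_pos C1 (ca C1) Hc1 Ha1). nra. }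
  destruct (angle_of Tax Tay T1x T1y HuA HuT Hcr0) as (p0 & Hp0 & R1x & R1y).
  exists p0.
  assert (HT1 : forall t, in_dom C1 t -> tx C1 t = rotx Tax Tay (p0 + phi C1 t) /\ ty C1 t = roty Tax Tay (p0 + phi C1 t)).
  { intros t Ht. apply T1_rot; auto. }
  assert (HD2 : 0 < Dx ^ 2 + Dy ^ 2).
  { destruct (Rle_lt_dec (Dx^2+Dy^2) 0); auto. assert (Dx = 0) by nra. assert (Dy = 0) by nra.
    unfold Dx, Dy in *. nra. }
  set (nD := sqrt (Dx ^ 2 + Dy ^ 2)).
  assert (HnD : 0 < nD) by (apply sqrt_lt_R0; auto).
  assert (HnD2 : nD * nD = Dx ^ 2 + Dy ^ 2) by (apply sqrt_sqrt; lra).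
  assert (HuD : (Dx / nD) ^ 2 + (Dy / nD) ^ 2 = 1).
  { field_simplify; [|lra]. rewrite <- HnD2. field. lra. }
  assert (HcrD : 0 <= Tax * (Dy / nD) - Tay * (Dx / nD)).
  { replace (Tax * (Dy / nD) - Tay * (Dx / nD)) with ((Tax * Dy - Tay * Dx) / nD) by (field; lra).
    apply Rdiv_le_0_compat; [unfold Dx, Dy; lra | lra]. }
  destruct (angle_of Tax Tay (Dx / nD) (Dy / nD) HuA HuD HcrD) as (d & Hd & RDx & RDy).
  assert (HDx : Dx = nD * rotx Tax Tay d) by (rewrite <- RDx; field; lra).
  assert (HDy : Dy = nD * roty Tax Tay d) by (rewrite <- RDy; field; lra).
  assert (Hsd : 0 < sin d).
  { rewrite <- (rot_cr0 Tax Tay d HuA). rewrite <- RDx, <- RDy.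
    replace (Tax * (Dy / nD) - Tay * (Dx / nD)) with ((Tax * Dy - Tay * Dx) / nD) by (field; lra).
    apply Rdiv_lt_0_compat; [unfold Dx, Dy; lra | lra]. }
  assert (Hd' : 0 < d < PI).
  { split; destruct Hd as [Hd1 Hd2].
    - destruct (Req_dec d 0) as [->|]; [rewrite sin_0 in Hsd; lra | lra].
    - destruct (Req_dec d PI) as [->|]; [rewrite sin_PI in Hsd; lra | lra]. }
  assert (Htd : 0 < sin (Th - d)).
  { replace (Tbx * (ya - yb) - Tby * (xa - xb)) with (Dx * Tby - Dy * Tbx) in HY by (unfold Dx, Dy; ring).
    rewrite HDx, HDy, Rbx, Rby in HY.
    replace (nD * rotx Tax Tay d * roty Tax Tay Th - nD * roty Tax Tay d * rotx Tax Tay Th)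
      with (nD * (rotx Tax Tay d * roty Tax Tay Th - roty Tax Tay d * rotx Tax Tay Th)) in HY by ring.
    rewrite rot_cr in HY by auto. nra. }
  assert (Hc : forall t, in_dom C1 t -> 0 <= lin C1 (- Dx) (- Dy) xa ya t).
  { apply (hull_lin C1 C2); auto. intros u Hu. pose proof (C2H C2 u Hcv2 Hpi Hu).
    unfold lin in *. fold xa ya xb yb in H. fold Dx Dy in H. lra. }
  set (pb := p0 + phi C1 (cb C1)).
  destruct (HT1 (cb C1) Hb1) as [Tbx1 Tby1]. fold pb in Tbx1, Tby1.
  assert (Hs1 : sin (p0 - d) <= 0).
  { pose proof (E_left _ _ _ _ Hab1 (lin_deriv C1 (- Dx) (- Dy) xa ya (ca C1) Hc1 Ha1)) as HE.
    assert (HE' : 0 <= spd C1 (ca C1) * (- Dx * T1y - - Dy * T1x)).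
    { apply HE. intros x Hx. pose proof (Hc x Hx). unfold lin in *. rewrite E1x, E1y. lra. }
    rewrite HDx, HDy, R1x, R1y in HE'.
    replace (- (nD * rotx Tax Tay d) * roty Tax Tay p0 - - (nD * roty Tax Tay d) * rotx Tax Tay p0)
      with (- nD * (rotx Tax Tay d * roty Tax Tay p0 - roty Tax Tay d * rotx Tax Tay p0)) in HE' by ring.
    rewrite rot_cr in HE' by auto. exact (sign1 _ _ _ (spd_pos C1 (ca C1) Hc1 Ha1) HnD HE'). }
  assert (Hs2 : 0 <= sin (pb - d)).
  { pose proof (E_right _ _ _ _ Hab1 (lin_deriv C1 (- Dx) (- Dy) xa ya (cb C1) Hc1 Hb1)) as HE.
    assert (HE' : spd C1 (cb C1) * (- Dx * ty C1 (cb C1) - - Dy * tx C1 (cb C1)) <= 0).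
    { apply HE. intros x Hx. pose proof (Hc x Hx). unfold lin in *. rewrite E2x, E2y.
      replace (- Dx * (yb - ya) - - Dy * (xb - xa)) with 0 by (unfold Dx, Dy; ring). lra. }
    rewrite HDx, HDy, Tbx1, Tby1 in HE'.
    replace (- (nD * rotx Tax Tay d) * roty Tax Tay pb - - (nD * roty Tax Tay d) * rotx Tax Tay pb)
      with (- nD * (rotx Tax Tay d * roty Tax Tay pb - roty Tax Tay d * rotx Tax Tay pb)) in HE' by ring.
    rewrite rot_cr in HE' by auto. exact (sign2 _ _ _ (spd_pos C1 (cb C1) Hc1 Hb1) HnD HE'). }
  assert (Hg : forall t, in_dom C1 t -> 0 <= lin C1 Tbx Tby xb yb t).
  { apply (hull_lin C1 C2); auto. intros u Hu. apply (conv_T C2 (cb C2) u Hcv2 Hb2 Hu). }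
  assert (Hs3 : sin (pb - Th) <= 0).
  { pose proof (E_right _ _ _ _ Hab1 (lin_deriv C1 Tbx Tby xb yb (cb C1) Hc1 Hb1)) as HE.
    assert (HE' : spd C1 (cb C1) * (Tbx * ty C1 (cb C1) - Tby * tx C1 (cb C1)) <= 0).
    { apply HE. intros x Hx. pose proof (Hg x Hx). unfold lin in *. rewrite E2x, E2y.
      replace (Tbx * (yb - yb) - Tby * (xb - xb)) with 0 by ring. lra. }
    rewrite Rbx, Rby, Tbx1, Tby1 in HE'.
    rewrite rot_cr in HE' by auto. exact (sign3 _ _ (spd_pos C1 (cb C1) Hc1 Hb1) HE'). }
  assert (Hphib : 0 <= phi C1 (cb C1)) by (pose proof (phi_pos C1 Hc1); lra).
  split; [lra|]. split; [|split; auto].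
  destruct (Rle_lt_dec pb Th) as [Hok|Hbad]; [exact Hok|].
  exfalso.
  assert (H2pi : p0 + 2 * PI <= pb) by (apply (angle_real p0 pb d Th); auto; unfold pb; lra).
  destruct (IVT_gen (phi C1) (ca C1) (cb C1) (2 * PI)) as (t2 & Ht2 & Hphi2).
  { intro x. apply phi_cont; auto. }
  { rewrite phi_a. rewrite Rmin_left, Rmax_right by lra. pose proof PI_RGT_0. unfold pb in H2pi. lra. }
  rewrite Rmin_left, Rmax_right in Ht2 by lra.
  assert (Ht2d : in_dom C1 t2) by (unfold in_dom; lra).
  assert (Hat2 : ca C1 < t2).
  { destruct (Req_dec t2 (ca C1)) as [->|]; [rewrite phi_a in Hphi2; pose proof PI_RGT_0; lra | lra]. }
  destruct (HT1 t2 Ht2d) as [T2x T2y]. rewrite Hphi2 in T2x, T2y.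
  assert (Ex : tx C1 t2 = tx C1 (ca C1)).
  { fold T1x. rewrite T2x, R1x. unfold rotx. rewrite cos_plus, sin_plus, cos_2PI, sin_2PI. ring. }
  assert (Ey : ty C1 t2 = ty C1 (ca C1)).
  { fold T1y. rewrite T2y, R1y. unfold roty. rewrite cos_plus, sin_plus, cos_2PI, sin_2PI. ring. }
  destruct (loop_contra C1 t2 Hcv1 Ht2d Hat2 Ex Ey) as (nu & Hnu & Nx & Ny).
  { intros t Ht. rewrite E1x, E1y, E2x, E2y. apply Hc; auto. }
  rewrite E1x, E2x in Nx. rewrite E1y, E2y in Ny. fold T1x in Nx. fold T1y in Ny.
  rewrite Nx, Ny in HX. nra.
Qed.

Lemma te_formula ux uy ps th : ux ^ 2 + uy ^ 2 = 1 ->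
  rotx ux uy ps * (roty ux uy th - uy) + roty ux uy ps * (ux - rotx ux uy th) = sin ps + sin (th - ps).
Proof.
  intros Hu. rewrite <- (rot_cr0 ux uy ps Hu), <- (rot_cr ux uy ps th Hu). ring.
Qed.

Lemma pj_formula ux uy ps th : ux ^ 2 + uy ^ 2 = 1 ->
  rotx ux uy ps * (- (ux - rotx ux uy th)) + roty ux uy ps * (roty ux uy th - uy) = cos (th - ps) - cos ps.
Proof.
  intros Hu. rewrite <- (rot_dot0 ux uy ps Hu), <- (rot_dot ux uy ps th Hu). ring.
Qed.

Lemma cos_mono x th : 0 <= x <= th -> th <= PI -> cos th <= cos x.
Proof.
  intros H1 H2. destruct (Req_dec x th) as [->|]; [lra|].
  left. apply cos_decreasing_1; lra.
Qed.

Lemma cos_le1 x : cos x <= 1.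
Proof. pose proof (COS_bound x). lra. Qed.

Theorem lemma4p5 (C1 C2 : curve) :
  convex_curve C1 -> convex_curve C2 ->
  same_endpoints C1 C2 ->
  (forall p, trace C1 p -> convex_hull (trace C2) p) ->
  total_curvature C2 <= PI ->
  forall M m, is_max_on C2 (curvature C2) M -> is_min_on C1 (curvature C1) m ->
  m <= M.
Proof.
  intros Hcv1 Hcv2 Hend Hh Htot M m [[tM [HtM EM]] HM] [[tm [Htm Em]] Hm].
  pose proof (proj1 Hcv1) as Hc1. pose proof (proj1 Hcv2) as Hc2.
  rewrite (total_phi C2 Hc2) in Htot.
  assert (Hm0 : 0 < m) by (rewrite <- Em; apply (rp_dom C1 tm Hc1 Htm)).
  assert (HM0 : 0 < M) by (rewrite <- EM; apply (rp_dom C2 tM Hc2 HtM)).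
  destruct Hend as [[E1 E2] | [E1 E2]]; [| exfalso; exact (reversed_false C1 C2 Hcv1 Hcv2 Htot Hh E1 E2)].
  destruct (forward_angles C1 C2 Hcv1 Hcv2 Htot Hh E1 E2) as (p0 & Hp0 & Hpb & R1x & R1y).
  pose proof (Ta_unit C2 Hc2) as HuA.
  destruct (T_rot C2 (cb C2) Hc2 (dom_b C2 Hc2)) as [Rbx Rby].
  pose proof (phi_pos C2 Hc2) as Hth.
  set (Tax := tx C2 (ca C2)) in *. set (Tay := ty C2 (ca C2)) in *.
  set (Th := phi C2 (cb C2)) in *.
  set (e1 := roty Tax Tay Th - Tay). set (e2 := Tax - rotx Tax Tay Th).
  assert (Hphi1 : forall t, in_dom C1 t -> 0 <= phi C1 t <= phi C1 (cb C1)) by (intros; apply phi_range; auto).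
  assert (HU := upper_ineq C1 e1 e2 m Hc1 Hm0).
  assert (HT1 : forall t, in_dom C1 t -> 0 <= Te C1 e1 e2 t).
  { intros t Ht. destruct (T1_rot C1 t Tax Tay p0 Hc1 Ht R1x R1y) as [F1 F2].
    unfold Te, e1, e2. rewrite F1, F2, te_formula by auto.
    specialize (Hphi1 t Ht).
    assert (0 <= sin (p0 + phi C1 t)) by (apply sin_ge_0; lra).
    assert (0 <= sin (Th - (p0 + phi C1 t))) by (apply sin_ge_0; lra). lra. }
  specialize (HU HT1 Hm).
  assert (HL := lower_ineq C2 e1 e2 M Hc2 HM0).
  assert (HT2 : forall t, in_dom C2 t -> 0 <= Te C2 e1 e2 t).
  { intros t Ht. destruct (T_rot C2 t Hc2 Ht) as [F1 F2].
    unfold Te, e1, e2. rewrite F1, F2, te_formula by auto.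
    pose proof (phi_range C2 t Hc2 Ht) as Hr. fold Th in Hr.
    assert (0 <= sin (phi C2 t)) by (apply sin_ge_0; lra).
    assert (0 <= sin (Th - phi C2 t)) by (apply sin_ge_0; lra). lra. }
  specialize (HL HT2 HM).
  assert (HXe : Xe C1 e1 e2 (cb C1) - Xe C1 e1 e2 (ca C1) = Xe C2 e1 e2 (cb C2) - Xe C2 e1 e2 (ca C2)).
  { unfold pt in E1, E2. injection E1 as E1x E1y. injection E2 as E2x E2y.
    unfold Xe. rewrite E1x, E1y, E2x, E2y. ring. }
  assert (HP2 : Pj C2 e1 e2 (cb C2) - Pj C2 e1 e2 (ca C2) = 2 - 2 * cos Th).
  { unfold Pj, e1, e2. rewrite Rbx, Rby. fold Tax Tay.
    rewrite pj_formula by auto. rewrite Rminus_diag, cos_0.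
    replace (Tax * - (Tax - rotx Tax Tay Th) + Tay * (roty Tax Tay Th - Tay)) with
      ((Tax * rotx Tax Tay Th + Tay * roty Tax Tay Th) - (Tax ^ 2 + Tay ^ 2)) by ring.
    rewrite rot_dot0, HuA by auto. ring. }
  assert (HP1 : Pj C1 e1 e2 (cb C1) - Pj C1 e1 e2 (ca C1) <= 2 - 2 * cos Th).
  { destruct (T1_rot C1 (cb C1) Tax Tay p0 Hc1 (dom_b C1 Hc1) R1x R1y) as [F1 F2].
    unfold Pj, e1, e2. rewrite F1, F2, R1x, R1y.
    rewrite !pj_formula by auto.
    pose proof (Hphi1 (cb C1) (dom_b C1 Hc1)).
    pose proof (cos_le1 (Th - (p0 + phi C1 (cb C1)))). pose proof (cos_le1 p0).
    pose proof (cos_mono (p0 + phi C1 (cb C1)) Th ltac:(lra) Htot).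
    pose proof (cos_mono (Th - p0) Th ltac:(lra) Htot).
    lra. }
  assert (HQ : 0 < 2 - 2 * cos Th).
  { assert (cos Th < cos 0) by (apply cos_decreasing_1; pose proof PI_RGT_0; lra).
    rewrite cos_0 in H. lra. }
  assert (Hinv : / M <= / m).
  { assert (/ M * (2 - 2 * cos Th) <= / m * (2 - 2 * cos Th)).
    { assert (0 < / m) by (apply Rinv_0_lt_compat; auto).
      replace (/ M * (2 - 2 * cos Th)) with (/ M * Pj C2 e1 e2 (cb C2) - / M * Pj C2 e1 e2 (ca C2))
        by (rewrite <- HP2; ring).
      apply Rle_trans with (/ m * Pj C1 e1 e2 (cb C1) - / m * Pj C1 e1 e2 (ca C1)); [lra|].
      replace (/ m * Pj C1 e1 e2 (cb C1) - / m * Pj C1 e1 e2 (ca C1)) with (/ m * (Pj C1 e1 e2 (cb C1) - Pj C1 e1 e2 (ca C1))) by ring.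
      apply Rmult_le_compat_l; lra. }
    apply (Rmult_le_reg_r (2 - 2 * cos Th)); auto. }
  destruct (Rle_lt_dec m M) as [|Hlt]; auto.
  assert (/ m < / M) by (apply Rinv_lt_contravar; [apply Rmult_lt_0_compat|]; auto).
  lra.
Qed.
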